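(* Let $\mathcal{M}$ be an orientable, compact, boundaryless, connected Riemannian manifold with volume form $dV$, and let $\mu:\mathcal{M}\to\mathbb{R}_{>0}$ be a continuous probability density. Let $\epsilon>0$ satisfy $\epsilon<\min_{x\in\mathcal{M}}\mu(x)$ and let $\lambda\ge 1$. For a continuous function $\bar\mu:\mathcal{M}\to\mathbb{R}$ with $\int_{\mathcal{M}}\bar\mu\,dV=1$, define $\bar\mu_+(x)=\max\{\epsilon,\bar\mu(x)\}$, $\bar\mu_-(x)=\epsilon-\min\{\epsilon,\bar\mu(x)\}$, and $$\ell(\bar\mu) = -\mathbb{E}_{x\sim\mu}\log\bar\mu_+(x) + \lambda\int_{\mathcal{M}}\bar\mu_-\,dV.$$ Then, over the set of continuous functions $\bar\mu$ on $\mathcal{M}$ with $\int_{\mathcal{M}}\bar\mu\,dV=1$, the function $\bar\mu=\mu$ is a minimizer of $\ell$, and it is the unique minimizer.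
   Context: $\mathbb{E}_{x\sim\mu}f(x)=\int_{\mathcal{M}} f\mu\,dV$. Note $\bar\mu_+,\bar\mu_-\ge 0$ and $\bar\mu=\bar\mu_+-\bar\mu_-$. (In the paper $\bar\mu$ is of the form $\nu-\operatorname{div}(u)$, which automatically has integral one.) *)

(* Defs.v *)
From HB Require Import structures.
From mathcomp Require Import all_boot all_order all_algebra.
From mathcomp Require Import all_classical all_reals all_analysis.
Set Implicit Arguments. Unset Strict Implicit. Unset Printing Implicit Defensive.
Import Order.TTheory GRing.Theory Num.Theory numFieldNormedType.Exports.
Local Open Scope classical_set_scope.
Local Open Scope ring_scope.

Definition borelT (T : ptopologicalType) := g_sigma_algebraType (@open T).

Section defs.
Context {R : realType} {T : ptopologicalType}.

Definition mu_plus (eps : R) (mb : T -> R) (x : T) : R := Num.max eps (mb x).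
Definition mu_minus (eps : R) (mb : T -> R) (x : T) : R := eps - Num.min eps (mb x).

Definition expect (vol : {measure set (borelT T) -> \bar R}) (mu f : T -> R) : R :=
  Rintegral vol setT (fun x : borelT T => f x * mu x).

Definition ell (vol : {measure set (borelT T) -> \bar R}) (mu : T -> R)
  (eps lam : R) (mb : T -> R) : R :=
  - expect vol mu (fun x => ln (mu_plus eps mb x))
  + lam * Rintegral vol setT (fun x : borelT T => mu_minus eps mb x).
End defs.

(* Main.v *)
Require Import Defs.
From HB Require Import structures.
From mathcomp Require Import all_boot all_order all_algebra.
From mathcomp Require Import all_classical all_reals all_analysis.
From mathcomp Require Import ring lra.
Import Order.TTheory GRing.Theory Num.Theory numFieldNormedType.Exports.
Local Open Scope classical_set_scope.
Local Open Scope ring_scope.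

Section H.
Context (R : realType) (T : ptopologicalType)
  (vol : {measure set (borelT T) -> \bar R}).

Lemma cont_meas (h : T -> R) : continuous h ->
  measurable_fun [set: borelT T] (h : borelT T -> R).
Proof.
move=> ch; apply: (measurability _ (measurable_realfun.RGenOpens.measurableE R)).
move=> _ [_ [a [b ->] <-]]; rewrite setTI.
apply: sub_sigma_algebra; move/continuousP: ch; apply.
exact: interval_open.
Qed.

Lemma cont_int (h : T -> R) : compact [set: T] ->
  (vol [set: borelT T] < +oo)%E -> continuous h ->
  vol.-integrable [set: borelT T] (EFin \o (h : borelT T -> R)).
Proof.
move=> cT fin ch; apply: measurable_bounded_integrable => //.
  exact: cont_meas.
have := compact_bounded (continuous_compact (continuous_subspaceT ch) cT).
case=> M [Mr HM]; exists M; split => // N MN x _.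
exact: (HM N MN (h x) (ex_intro2 _ _ x I erefl)).
Qed.

Lemma cont_int0 (h : T -> R) : compact [set: T] ->
  (vol [set: borelT T] < +oo)%E ->
  (forall U : set T, open U -> U !=set0 -> (0 < vol U)%E) ->
  continuous h -> (forall x, 0 <= h x) ->
  Rintegral vol [set: borelT T] (fun x : borelT T => h x) <= 0 -> forall x, h x = 0.
Proof.
move=> cT fin supp ch h0 hle x; apply/eqP; rewrite eq_le h0 andbT leNgt; apply/negP => hx.
set c := h x / 2.
have c0 : 0 < c by rewrite divr_gt0.
pose U := h @^-1` `]c, +oo[%classic.
have oU : open U by move/continuousP: ch; apply; exact: interval_open.
have mU : measurable (U : set (borelT T)) by exact: sub_sigma_algebra.
have xU : U x by rewrite /U /= in_itv /= andbT /c ltr_pdivrMr // ltr_pMr // ltr1n.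
have vU : (0 < vol U)%E by apply: supp => //; exists x.
have vUf : (vol U < +oo)%E.
  by apply: le_lt_trans fin; apply: le_measure => //; rewrite inE.
have iI : vol.-integrable [set: borelT T] (EFin \o (fun y : borelT T => (\1_U y : R))).
  apply: measurable_bounded_integrable => //; first exact: measurable_realfun.measurable_indic.
  exists 1; split => // M M1 y _ /=; rewrite /indic; case: (_ \in _) => /=.
    by rewrite normr1 ltW.
  by rewrite normr0 ltW // (lt_trans _ M1).
have : Rintegral vol [set: borelT T] (fun y : borelT T => c * \1_U y) <=
       Rintegral vol [set: borelT T] (fun y : borelT T => h y).
  apply: le_Rintegral => //.
  - apply: (eq_integrable measurableT _ _ _ (integrableZl measurableT c iI)) => y _ /=; by rewrite EFinM.
  - exact: cont_int.
  move=> y _; rewrite indicE; have [/set_mem|_] := boolP (y \in U); last by rewrite mulr0 h0.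
  by rewrite mulr1 /U /= in_itv /= andbT => /ltW.
rewrite RintegralZl // /Rintegral integral_indic // setIT.
move=> H; have := le_trans H hle; apply/negP; rewrite -ltNge.
by rewrite mulr_gt0 // fine_gt0 // vU vUf.
Qed.

Lemma cD (f g : T -> R) : continuous f -> continuous g -> continuous (fun x => f x + g x).
Proof. by move=> cf cg x; exact: (@continuousD R R^o T f g x (cf x) (cg x)). Qed.
Lemma cB (f g : T -> R) : continuous f -> continuous g -> continuous (fun x => f x - g x).
Proof. by move=> cf cg x; exact: (@continuousB R R^o T f g x (cf x) (cg x)). Qed.
Lemma cM (f g : T -> R) : continuous f -> continuous g -> continuous (fun x => f x * g x).
Proof. by move=> cf cg x; exact: (@continuousM R T f g x (cf x) (cg x)). Qed.
Lemma cC (c : R) : continuous (fun _ : T => c).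
Proof. exact: cst_continuous. Qed.
Lemma cMax (f g : T -> R) : continuous f -> continuous g -> continuous (fun x => Num.max (f x) (g x)).
Proof. by move=> cf cg x; exact: (@continuous_max R T f g x (cf x) (cg x)). Qed.
Lemma cMin (f g : T -> R) : continuous f -> continuous g -> continuous (fun x => Num.min (f x) (g x)).
Proof. by move=> cf cg x; exact: (@continuous_min R T f g x (cf x) (cg x)). Qed.
Lemma cLn (f : T -> R) : continuous f -> (forall x, 0 < f x) -> continuous (fun x => ln (f x)).
Proof. by move=> cf fp x; apply: (continuous_comp (cf x) (continuous_ln (fp x))). Qed.
End H.

Lemma Hpos (R : realType) (m f : R) : 0 < m -> 0 < f ->
  0 <= f - m - m * (ln f - ln m) /\
  (f - m - m * (ln f - ln m) = 0 -> f = m).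
Proof.
move=> m0 f0.
have E : f = m * expR (ln f - ln m).
  by rewrite expRB !lnK ?posrE // mulrC divfK // gt_eqF.
split.
  have := expR_ge1Dx (ln f - ln m).
  move=> h; rewrite {1}E.
  have : m * (1 + (ln f - ln m)) <= m * expR (ln f - ln m) by rewrite ler_pM2l.
  lra.
move=> h0; have [/eqP t0|t0] := boolP (ln f - ln m == 0).
  by apply: (ln_inj); rewrite ?posrE //; lra.
have := expR_gt1Dx t0.
have : m * (1 + (ln f - ln m)) < m * expR (ln f - ln m).
  by rewrite ltr_pM2l // expR_gt1Dx.
lra.
Qed.

Theorem theorem2 (R : realType) (T : ptopologicalType)
  (vol : {measure set (borelT T) -> \bar R})
  (hT_hausdorff : hausdorff_space T)
  (hT_compact : compact [set: T])
  (hT_connected : connected [set: T])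
  (hvol_fin : (vol [set: borelT T] < +oo)%E)
  (hvol_supp : forall U : set T, open U -> U !=set0 -> (0 < vol U)%E)
  (mu : T -> R)
  (hmu_cont : continuous mu)
  (hmu_pos : forall x, 0 < mu x)
  (hmu_int : Rintegral vol [set: borelT T] (fun x : borelT T => mu x) = 1)
  (eps lam : R)
  (heps_pos : 0 < eps)
  (heps_lt : forall x, eps < mu x)
  (hlam : 1 <= lam) :
  (forall mb : T -> R, continuous mb ->
     Rintegral vol [set: borelT T] (fun x : borelT T => mb x) = 1 ->
     ell vol mu eps lam mu <= ell vol mu eps lam mb) /\
  (forall mb : T -> R, continuous mb ->
     Rintegral vol [set: borelT T] (fun x : borelT T => mb x) = 1 ->
     ell vol mu eps lam mb <= ell vol mu eps lam mu -> mb = mu).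
Proof.
have ci h ch := @cont_int R T vol h hT_compact hvol_fin ch.
set I := Rintegral vol [set: borelT T].
have ellmu : ell vol mu eps lam mu = - I (fun x => ln (mu x) * mu x).
  rewrite /ell /expect -/I.
  have -> : I (fun x => mu_minus eps mu x) = 0.
    have -> : (fun x => mu_minus eps mu x) = (fun _ => 0).
      by apply/funext => x; rewrite /mu_minus min_l ?subrr // ltW.
    by rewrite /I Rintegral_cst // mul0r.
  rewrite mulr0 addr0; congr (- _); apply: eq_Rintegral => x _.
  by rewrite /mu_plus max_r // ltW.
pose f (mb : T -> R) (x : T) := mu_plus eps mb x.
pose g (mb : T -> R) (x : T) := mu_minus eps mb x.
pose H (mb : T -> R) (x : T) := f mb x - mu x - mu x * (ln (f mb x) - ln (mu x)).
have fpos (mb : T -> R) (x : T) : 0 < f mb x by rewrite /f /mu_plus lt_max heps_pos.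
have gpos (mb : T -> R) (x : T) : 0 <= g mb x.
  by rewrite /g /mu_minus subr_ge0 ge_min lexx.
have fE (mb : T -> R) (x : T) : f mb x = mb x + g mb x.
  rewrite /f /g /mu_plus /mu_minus; case: lerP => _; lra.
have cf (mb : T -> R) : continuous mb -> continuous (f mb).
  by move=> cmb; apply: cMax => //; exact: cC.
have cg (mb : T -> R) : continuous mb -> continuous (g mb).
  by move=> cmb; apply: cB; [exact: cC|apply: cMin => //; exact: cC].
have cH (mb : T -> R) : continuous mb -> continuous (H mb).
  move=> cmb; apply: cB; first by apply: cB; [exact: cf|].
  apply: cM => //; apply: cB; last exact: cLn.
  by apply: cLn; [exact: cf|].
have key (mb : T -> R) : continuous mb -> I (fun x => mb x) = 1 ->
    ell vol mu eps lam mb - ell vol mu eps lam mu = I (H mb) + (lam - 1) * I (g mb).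
  move=> cmb imb; rewrite ellmu /ell /expect -/I.
  have cl : continuous (fun x => ln (f mb x) * mu x) by apply: cM => //; apply: cLn; [exact: cf|].
  have cl2 : continuous (fun x => ln (mu x) * mu x) by apply: cM => //; apply: cLn.
  have -> : I (H mb) = (I (fun x => mb x) + I (g mb)) - I (fun x => mu x)
      - (I (fun x => ln (f mb x) * mu x) - I (fun x => ln (mu x) * mu x)).
    have cmg : continuous (fun x => mb x + g mb x) by apply: cD => //; exact: cg.
    have cmgm : continuous (fun x => (mb x + g mb x) - mu x) by exact: cB.
    have cll : continuous (fun x => ln (f mb x) * mu x - ln (mu x) * mu x) by exact: cB.
    have e0 : I (H mb) = I (fun x => ((mb x + g mb x) - mu x)
                 - (ln (f mb x) * mu x - ln (mu x) * mu x)).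
      by apply: eq_Rintegral => x _; rewrite /H fE; ring.
    rewrite e0 /I RintegralB //; try exact: ci.
    rewrite RintegralB //; try exact: ci.
    rewrite RintegralB //; try exact: ci.
    rewrite RintegralD //; try exact: ci; exact: ci (cg mb cmb).
  rewrite -/I in hmu_int *; rewrite imb hmu_int.
  have -> : I (fun x => mu_minus eps mb x) = I (g mb) by [].
  have -> : I (fun x => ln (mu_plus eps mb x) * mu x) = I (fun x => ln (f mb x) * mu x) by [].
  ring.
have IH0 (mb : T -> R) : 0 <= I (H mb).
  by apply: Rintegral_ge0 => x _; case: (@Hpos R _ _ (hmu_pos x) (fpos mb x)).
have Ig0 (mb : T -> R) : 0 <= I (g mb) by apply: Rintegral_ge0 => x _; exact: gpos.
split.
  move=> mb cmb imb; have := key mb cmb imb.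
  have := IH0 mb; have := Ig0 mb.
  have : 0 <= (lam - 1) * I (g mb) by rewrite mulr_ge0 // subr_ge0.
  lra.
move=> mb cmb imb hle; have := key mb cmb imb.
have := IH0 mb; have := Ig0 mb.
have : 0 <= (lam - 1) * I (g mb) by rewrite mulr_ge0 // subr_ge0.
move=> h1 h2 h3 h4.
have HI : I (H mb) <= 0 by lra.
have H0 := @cont_int0 R T vol (H mb) hT_compact hvol_fin hvol_supp (cH mb cmb)
  (fun x => proj1 (@Hpos R _ _ (hmu_pos x) (fpos mb x))) HI.
apply/funext => x.
have fx : f mb x = mu x := proj2 (@Hpos R _ _ (hmu_pos x) (fpos mb x)) (H0 x).
move: fx; rewrite /f /mu_plus; case: lerP => // _ h.
by have := heps_lt x; rewrite -h ltxx.
Qed.
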